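(* In the setting of the (tweaked) $s$-wide replacement product described in the context, let $z\in\mathbb F_2^{[n]}$ with $\mathrm{bias}(z)\le\eta_0$ and let $P_z$ be the diagonal matrix indexed by $[n]\times[d_1]^s$ with $(P_z)_{(v,h),(v,h)}=(-1)^{z_v}$. Suppose $\gamma\ge0$ is such that $\sigma_2(M_i)\le\gamma$ for all $0\le i\le s-2$. Then $$\Big\|\,M_{s-2}P_z\,M_{s-3}P_z\cdots M_1P_z\,M_0P_z\Big\|_{\mathrm{op}}\le(\eta_0+2\gamma)^{\lfloor (s-1)/2\rfloor}.$$
   Context: Let $G$ be a $d_1$-regular undirected graph on $[n]$ whose neighbours of each vertex $v$ are labeled $v_G[1],\dots,v_G[d_1]$, with rotation map $\mathrm{rot}_G:[n]\times[d_1]\to[n]\times[d_1]$, $\mathrm{rot}_G(v,j)=(v',j')$ iff $v_G[j]=v'$ and $v'_G[j']=v$; assume it is locally invertible, i.e. there is a bijection $\varphi:[d_1]\to[d_1]$ with $\mathrm{rot}_G(v,j)=(v_G[j],\varphi(j))$. Let $A_G$ be the normalized adjacency matrix of $G$. Let $H$ be a $d_2$-regular undirected graph on vertex set $[d_1]^s$ with normalized adjacency matrix $A_H$. For $i\in\{0,\dots,s-1\}$ let $\mathrm{Rot}_i:[n]\times[d_1]^s\to[n]\times[d_1]^s$ send $(v,(a_0,\dots,a_{s-1}))$ to $(v',(a_0,\dots,a_{i-1},a_i',a_{i+1},\dots,a_{s-1}))$ where $(v',a_i')=\mathrm{rot}_G(v,a_i)$, and let $G_i$ be the permutation matrix realizing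 $\mathrm{Rot}_i$ on $\mathbb R^{[n]\times[d_1]^s}=\mathbb R^{V(G)}\otimes\mathbb R^{V(H)}$. For every integer $i$ set $M_i=(I\otimes A_H)\,G_{i\bmod s}\,(I\otimes A_H)$. $\sigma_2(X)$ denotes the second largest singular value of $X$; norms and singular values are with respect to the inner product given by the uniform probability measure on coordinates (equivalently the standard ones, the space being fixed). $\mathrm{bias}(z)=|\mathbb E_{v\in[n]}(-1)^{z_v}|$. *)

(* Defs.v *)
From HB Require Import structures.
From mathcomp Require Import all_boot all_order all_algebra.
Set Implicit Arguments. Unset Strict Implicit. Unset Printing Implicit Defensive.
Import Order.TTheory GRing.Theory Num.Theory.
Local Open Scope ring_scope.

Definition Lbl (d1 s : nat) := {ffun 'I_s -> 'I_d1}.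
Definition Vtx (n d1 s : nat) := ('I_n * Lbl d1 s)%type.

(* A rotation map of an undirected d-regular graph on a vertex type T:
   rot (v,j) = (v',j') iff v[j] = v' and v'[j'] = v; this means rot is an involution. *)
Definition is_rotation_map (T : finType) (d : nat) (rot : T * 'I_d -> T * 'I_d) :=
  involutive rot.

Definition locally_invertible (T : finType) (d : nat) (rot : T * 'I_d -> T * 'I_d) :=
  exists phi : 'I_d -> 'I_d, bijective phi /\ forall v j, (rot (v, j)).2 = phi j.

Definition mxOf (R : fieldType) (T : finType) (F : T -> T -> R) : 'M[R]_#|{: T}| :=
  \matrix_(i, j) F (enum_val i) (enum_val j).

Definition adjH (R : fieldType) (W : finType) (d : nat) (rotH : W * 'I_d -> W * 'I_d)
  (u w : W) : R := #|[set k : 'I_d | (rotH (u, k)).1 == w]|%:R / d%:R.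
Arguments adjH R {W d} rotH u w.

(* Entries of I (x) A_H on [n] x [d1]^s. *)
Definition IAH (R : fieldType) (n d1 s d2 : nat)
  (rotH : Lbl d1 s * 'I_d2 -> Lbl d1 s * 'I_d2) (x y : Vtx n d1 s) : R :=
  (x.1 == y.1)%:R * adjH R rotH x.2 y.2.
Arguments IAH R n {d1 s d2} rotH x y.

(* Rot_{i mod s} on [n] x [d1]^s (the identity only in the degenerate case s = 0). *)
Definition Rot (n d1 s : nat) (rotG : 'I_n * 'I_d1 -> 'I_n * 'I_d1) (i : nat)
  (x : Vtx n d1 s) : Vtx n d1 s :=
  match insub (i %% s)%N : option 'I_s with
  | Some j => let r := rotG (x.1, x.2 j) in
              (r.1, [ffun k => if k == j then r.2 else x.2 k])
  | None => x
  end.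

Definition Gmx (R : fieldType) (n d1 s : nat) (rotG : 'I_n * 'I_d1 -> 'I_n * 'I_d1)
  (i : nat) : 'M[R]_#|{: Vtx n d1 s}| :=
  mxOf (fun x y : Vtx n d1 s => (Rot rotG i x == y)%:R).
Arguments Gmx R {n d1} s rotG i.

Definition Mmx (R : fieldType) (n d1 s d2 : nat) (rotG : 'I_n * 'I_d1 -> 'I_n * 'I_d1)
  (rotH : Lbl d1 s * 'I_d2 -> Lbl d1 s * 'I_d2) (i : nat) : 'M[R]_#|{: Vtx n d1 s}| :=
  mxOf (IAH R n rotH) *m Gmx R s rotG i *m mxOf (IAH R n rotH).
Arguments Mmx R {n d1 s d2} rotG rotH i.

Definition Pz (R : fieldType) (n d1 s : nat) (z : 'I_n -> bool) : 'M[R]_#|{: Vtx n d1 s}| :=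
  mxOf (fun x y : Vtx n d1 s => (x == y)%:R * (-1) ^+ z x.1).
Arguments Pz R {n} d1 s z.

Fixpoint prodMP (R : fieldType) (n d1 s d2 : nat) (rotG : 'I_n * 'I_d1 -> 'I_n * 'I_d1)
  (rotH : Lbl d1 s * 'I_d2 -> Lbl d1 s * 'I_d2) (z : 'I_n -> bool) (k : nat)
  : 'M[R]_#|{: Vtx n d1 s}| :=
  match k with
  | 0 => 1%:M
  | k'.+1 => Mmx R rotG rotH k' *m Pz R d1 s z *m prodMP R rotG rotH z k'
  end.
Arguments prodMP R {n d1 s d2} rotG rotH z k.

Definition bias (R : numFieldType) (n : nat) (z : 'I_n -> bool) : R :=
  `| n%:R^-1 * \sum_(v < n) (-1) ^+ z v |.
Arguments bias R {n} z.

Definition vnorm (R : rcfType) (N : nat) (f : 'cV[R]_N) : R :=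
  Num.sqrt (N%:R^-1 * \sum_(i < N) f i 0 ^+ 2).

Definition opnorm_le (R : rcfType) (N : nat) (X : 'M[R]_N) (c : R) : Prop :=
  forall f : 'cV[R]_N, vnorm (X *m f) <= c * vnorm f.

(* sv is the list of singular values of X (with multiplicity, nonincreasing):
   nonnegative reals whose squares are the eigenvalues of X^T X
   (the adjoint w.r.t. the uniform inner product is the transpose). *)
Definition singular_values (R : rcfType) (N : nat) (X : 'M[R]_N) (sv : seq R) : Prop :=
  [/\ size sv = N, sorted (fun a b => b <= a) sv, all (fun a => 0 <= a) sv &
      char_poly (X^T *m X) = \prod_(a <- sv) ('X - (a ^+ 2)%:P)].

Definition sigma2_le (R : rcfType) (N : nat) (X : 'M[R]_N) (c : R) : Prop :=
  exists sv, singular_values X sv /\ sv`_1 <= c.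

(* Main.v *)
Require Import Defs.
From HB Require Import structures.
From mathcomp Require Import all_boot all_order all_algebra.
From mathcomp Require Import mxred sesquilinear spectral.
From mathcomp Require Import complex.
From mathcomp Require Import ring lra.
Import Order.TTheory GRing.Theory Num.Theory.
Set Implicit Arguments. Unset Strict Implicit. Unset Printing Implicit Defensive.
Local Open Scope ring_scope.

Lemma char_poly_similar (F : fieldType) n (P D : 'M[F]_n) :
  P \in unitmx -> char_poly (invmx P *m D *m P) = char_poly D.
Proof.
move=> Pu.
set P' := map_mx (@polyC F) P.
have key : P' *m char_poly_mx (invmx P *m D *m P) = char_poly_mx D *m P'.
  rewrite /char_poly_mx mulmxBr mulmxBl scalar_mxC; congr (_ - _).
  by rewrite -map_mxM !mulmxA mulmxV // mul1mx map_mxM.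
have := congr1 determinant key; rewrite !det_mulmx mulrC.
have dP : \det P' != 0.
  by rewrite det_map_mx polyC_eq0 -unitfE -unitmxE.
by move/(mulIf dP).
Qed.

Section Spec.
Variable R : rcfType.

Lemma real_spectral N (B : 'M[R]_N) : B^T = B ->
  exists (e : 'I_N -> R) (phi : 'I_N -> 'cV[R]_N -> R[i]),
  [/\ char_poly B = \prod_(k < N) ('X - (e k)%:P),
      forall f u : 'cV[R]_N, ((f^T *m u) 0 0)%:C%C = \sum_(k < N) (phi k f)^* * phi k u &
      forall k (u : 'cV[R]_N), phi k (B *m u) = (e k)%:C%C * phi k u].
Proof.
move=> Bt.
pose rc := real_complex R.
set Bc := map_mx rc B.
have Bsym : Bc \is symmetricmx.
  apply/is_hermitianmxP; rewrite expr0 scale1r.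
  by apply/matrixP => i j; rewrite !mxE -[in LHS]Bt mxE.
have Breal : Bc \is a mxOver Num.real.
  by apply/mxOverP => i j; rewrite mxE /rc /= complex_real.
have Bh := realsym_hermsym Bsym Breal.
have /orthomx_spectralP EQ := hermitian_normalmx Bh.
set P := spectralmx Bc in EQ; set d := spectral_diag Bc in EQ.
have Pun : P \is unitarymx := spectral_unitarymx Bc.
have Pu : P \in unitmx := unitarymx_unit Pun.
have dreal := hermitian_spectral_diag_real Bh.
pose e k := complex.Re (d 0 k).
have de : forall k, (e k)%:C%C = d 0 k.
  by move=> k; apply: RRe_real; apply: (mxOverP dreal).
exists e, (fun k f => (P *m map_mx rc f) k 0); split.
- apply: (@map_poly_inj _ _ rc).
  rewrite map_char_poly -/Bc EQ char_poly_similar // char_poly_trig ?diag_mx_is_trig //.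
  rewrite rmorph_prod; apply: eq_bigr => k _.
  by rewrite rmorphB /= map_polyX map_polyC /= mxE eqxx mulr1n de.
- move=> f u.
  have -> : ((f^T *m u) 0 0)%:C%C = ((map_mx rc f)^T *m map_mx rc u) 0 0.
    by rewrite map_trmx -map_mxM [in RHS]mxE.
  have fr : (map_mx rc f)^T = ((map_mx rc f)^t* )%sesqui.
    apply/matrixP => i j; rewrite !mxE /rc /=.
    by apply/esym/CrealP; rewrite complex_real.
  have PP : (P^t* *m P)%sesqui = 1%:M.
    by have := mulmxKtV (1%:M : 'M_N) Pun (erefl _); rewrite mul1mx.
  have -> : (map_mx rc f)^T *m map_mx rc u
      = ((P *m map_mx rc f)^t* )%sesqui *m (P *m map_mx rc u).
    by rewrite fr trmx_mul map_mxM mulmxA -[_ *m _ *m P]mulmxA PP mulmx1.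
  by rewrite mxE; apply: eq_bigr => k _; rewrite !mxE.
- move=> k u.
  rewrite map_mxM -/Bc mulmxA EQ !mulmxA mulmxV // mul1mx -mulmxA mul_diag_mx mxE.
  by rewrite de.
Qed.
End Spec.
Section Lin.
Variable R : rcfType.
Variable N : nat.
Implicit Types f g : 'cV[R]_N.

Definition dot f g : R := \sum_(i < N) f i 0 * g i 0.
Definition nrm2 f := dot f f.
Definition nr f := Num.sqrt (nrm2 f).
Definition bnd (X : 'M[R]_N) (c : R) := forall f, nr (X *m f) <= c * nr f.

Lemma nrm2_ge0 f : 0 <= nrm2 f.
Proof. by apply: sumr_ge0 => i _; rewrite -expr2 sqr_ge0. Qed.

Lemma nr_ge0 f : 0 <= nr f.
Proof. exact: sqrtr_ge0. Qed.

Lemma nr_sqr f : nr f ^+ 2 = nrm2 f.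
Proof. by rewrite sqr_sqrtr ?nrm2_ge0. Qed.

Lemma dotC f g : dot f g = dot g f.
Proof. by apply: eq_bigr => i _; rewrite mulrC. Qed.

Lemma nrm2_comb (x y : R) f g :
  nrm2 (x *: f - y *: g) = x ^+ 2 * nrm2 f - 2 * x * y * dot f g + y ^+ 2 * nrm2 g.
Proof.
rewrite /nrm2 /dot !mulr_sumr -sumrB -big_split /=; apply: eq_bigr => i _.
rewrite !mxE; ring.
Qed.


Lemma nrm2_eq0 {f} : nrm2 f = 0 -> f = 0.
Proof.
move=> H; apply/matrixP => i j; rewrite ord1 mxE.
have /psumr_eq0P H2 := H.
have := H2 (fun k _ => ltac:(rewrite -expr2 sqr_ge0 //)) i isT.
by move/eqP; rewrite mulf_eq0 orbb => /eqP.
Qed.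

Lemma CS f g : dot f g ^+ 2 <= nrm2 f * nrm2 g.
Proof.
have [a0|apos] := eqVneq (nrm2 f) 0.
  have f0 := nrm2_eq0 a0; rewrite a0 mul0r /dot big1 ?expr0n // => i _; rewrite f0.
  by rewrite mxE mul0r.
have a_gt0 : 0 < nrm2 f by rewrite lt_def apos nrm2_ge0.
have := nrm2_ge0 (nrm2 f *: g - dot f g *: f).
rewrite nrm2_comb (dotC g f).
move=> H.
have : 0 <= nrm2 f * (nrm2 f * nrm2 g - dot f g ^+ 2).
  suff -> : nrm2 f * (nrm2 f * nrm2 g - dot f g ^+ 2) = nrm2 f ^+ 2 * nrm2 g - 2 * nrm2 f * dot f g * dot f g + dot f g ^+ 2 * nrm2 f by [].
  ring.
by rewrite pmulr_rge0 // subr_ge0.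
Qed.

Lemma dot_le f g : dot f g <= nr f * nr g.
Proof.
rewrite -sqrtrM ?nrm2_ge0 //.
apply: le_trans (ler_norm _) _.
by rewrite -sqrtr_sqr ler_sqrt ?CS // mulr_ge0 ?nrm2_ge0.
Qed.

Lemma nrm2D f g : nrm2 (f + g) = nrm2 f + 2 * dot f g + nrm2 g.
Proof.
rewrite /nrm2 /dot mulr_sumr -!big_split /=; apply: eq_bigr => i _.
rewrite !mxE; ring.
Qed.

Lemma nrD f g : nr (f + g) <= nr f + nr g.
Proof.
rewrite -(ger0_norm (addr_ge0 (nr_ge0 f) (nr_ge0 g))) -[X in X <= _]ger0_norm ?nr_ge0 //.
rewrite -ler_sqr ?nnegrE ?normr_ge0 // !real_normK ?ger0_real ?nr_ge0 ?addr_ge0 ?nr_ge0 //.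
rewrite nr_sqr nrm2D sqrrD !nr_sqr.
have := dot_le f g; lra.
Qed.

Lemma bnd_mul X Y a b : 0 <= a -> bnd X a -> bnd Y b -> bnd (X *m Y) (a * b).
Proof.
move=> a0 HX HY f; rewrite -mulmxA; apply: le_trans (HX _) _.
by rewrite -mulrA ler_wpM2l.
Qed.

Lemma bnd_add X Y a b : bnd X a -> bnd Y b -> bnd (X + Y) (a + b).
Proof.
move=> HX HY f; rewrite mulmxDl; apply: le_trans (nrD _ _) _.
by rewrite mulrDl lerD.
Qed.

Lemma bnd_le X a b : a <= b -> bnd X a -> bnd X b.
Proof.
move=> ab HX f; apply: le_trans (HX f) _; by rewrite ler_wpM2r ?nr_ge0.
Qed.

Lemma bnd_nrm2 X c : 0 <= c -> (forall f, nrm2 (X *m f) <= c ^+ 2 * nrm2 f) -> bnd X c.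
Proof.
move=> c0 H f; rewrite /nr -(ger0_norm c0) -sqrtr_sqr -sqrtrM ?sqr_ge0 //.
by rewrite ler_sqrt ?mulr_ge0 ?sqr_ge0 ?nrm2_ge0 // real_normK ?ger0_real.
Qed.

Lemma bnd_opnorm X c : 0 <= c -> bnd X c -> opnorm_le X c.
Proof.
move=> c0 H f; rewrite /vnorm.
have e : forall g : 'cV[R]_N, \sum_(i < N) g i 0 ^+ 2 = nrm2 g.
  by move=> g; apply: eq_bigr => i _; rewrite expr2.
rewrite !e !sqrtrM ?invr_ge0 ?ler0n // mulrCA.
by rewrite ler_wpM2l ?sqrtr_ge0 // H.
Qed.

End Lin.

Lemma count_sq_le1 (R : rcfType) (sv : seq R) :
  sorted (fun a b => b <= a) sv -> all (fun a => 0 <= a) sv ->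
  (count (fun x : R => (sv`_1 ^+ 2 < x)%R) [seq a ^+ 2 | a <- sv] <= 1)%N.
Proof.
case: sv => [//|a [|b t]] /= srt pos; first by case: (_ < _).
move: srt => /andP [_ srt].
have tr : transitive (fun a b : R => b <= a) by move=> x y w h1 h2; apply: le_trans h2 h1.
have /allP allb := order_path_min tr srt.
move: pos => /and3P [_ b0 /allP tpos].
rewrite ltxx add0n.
suff -> : count (fun x : R => b ^+ 2 < x) [seq a0 ^+ 2 | a0 <- t] = 0%N.
  by case: (_ < _).
apply/eqP; rewrite -leqn0 leqNgt -has_count; apply/hasPn => x /mapP [y yt ->].
rewrite -leNgt ler_sqr ?nnegrE ?(tpos y yt) //.
exact: allb.
Qed.

Lemma dotE (R : rcfType) N (f h : 'cV[R]_N) : dot f h = (f^T *m h) 0 0.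
Proof. by rewrite mxE; apply: eq_bigr => i _; rewrite mxE. Qed.

Lemma dotZr (R : rcfType) N (f h : 'cV[R]_N) a : dot f (a *: h) = a * dot f h.
Proof. by rewrite /dot mulr_sumr; apply: eq_bigr => i _; rewrite mxE mulrCA. Qed.

Lemma sigma2_bound (R : rcfType) N (M : 'M[R]_N) (sv : seq R) (gam : R) :
  singular_values M sv -> sv`_1 <= gam -> bnd M 1 ->
  M *m (const_mx 1 : 'cV[R]_N) = const_mx 1 -> M^T *m (const_mx 1 : 'cV[R]_N) = const_mx 1 ->
  forall g : 'cV[R]_N, dot g (const_mx 1) = 0 -> nrm2 (M *m g) <= gam ^+ 2 * nrm2 g.
Proof.
case=> _ svsort svpos cpB sv1 Mn1 M1 MT1 g g1.
pose B : 'M[R]_N := M^T *m M; rewrite -/B in cpB.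
have BT : B^T = B by rewrite /B trmx_mul trmxK.
have [e [phi [Se S0 S2]]] := real_spectral BT.
set u : 'cV[R]_N := const_mx 1 in M1 MT1 g1.
have nMB : forall f : 'cV[R]_N, nrm2 (M *m f) = dot f (B *m f).
  by move=> f; rewrite /nrm2 !dotE trmx_mul /B !mulmxA.
have Bu : B *m u = u by rewrite /B -mulmxA M1 MT1.
have pe : perm_eq [seq e k | k <- enum 'I_N] [seq a ^+ 2 | a <- sv].
  apply: prod_XsubC_eq; rewrite !big_map -enumT big_enum /= -Se cpB.
  done.
have e1 : forall k, e k <= 1.
  move=> k.
  have : root (char_poly B) (e k).
    by rewrite Se (bigD1 k) //= rootM root_XsubC eqxx.
  rewrite -eigenvalue_root_char => /eigenvalueP [v vB vn0].
  set c := v^T.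
  have Bc : B *m c = e k *: c by rewrite /c -BT -trmx_mul vB linearZ.
  have H : nrm2 (M *m c) <= nrm2 c.
    by rewrite -!nr_sqr ler_sqr ?nnegrE ?nr_ge0 //; have := Mn1 c; rewrite mul1r.
  rewrite nMB Bc dotZr -/(nrm2 c) in H.
  have cpos : 0 < nrm2 c.
    rewrite lt_def nrm2_ge0 andbT; apply/eqP => /nrm2_eq0 /eqP.
    by rewrite trmx_eq0; apply/negP.
  by rewrite -(ler_pM2r cpos) mul1r.
pose n2 k := phi k g * (phi k g)^*.
have n2ge0 : forall k, 0 <= n2 k by move=> k; apply: mul_conjC_ge0.
have Eg : (nrm2 g)%:C%C = \sum_k n2 k.
  by rewrite /nrm2 dotE S0; apply: eq_bigr => k _; rewrite mulrC.
have EMg : (nrm2 (M *m g))%:C%C = \sum_k (e k)%:C%C * n2 k.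
  by rewrite nMB dotE S0; apply: eq_bigr => k _; rewrite S2 /n2 mulrCA [_^* * _]mulrC.
set s1 := sv`_1 ^+ 2.
have s1g : s1 <= gam ^+ 2.
  have sv10 : 0 <= sv`_1.
    case: (ltnP 1 (size sv)) => [lt|le]; first by apply: (allP svpos); rewrite mem_nth.
    by rewrite nth_default.
  by rewrite /s1 ler_sqr ?nnegrE // (le_trans sv10 sv1).
have cnt := count_sq_le1 svsort svpos.
rewrite -/s1 -(permP pe) count_map in cnt.
have key : forall k, e k <= gam ^+ 2 \/ n2 k = 0.
  move=> k.
  have [s1big|s1small] := leP 1 s1.
    by left; apply: le_trans (e1 k) (le_trans s1big s1g).
  have [k1 Hk1] : exists k1, phi k1 u != 0.
    case: (boolP [exists k1, phi k1 u != 0]) => [/existsP //|].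
    rewrite negb_exists => /forallP H; exfalso.
    have : ((dot u u)%:C%C : R[i]) = 0.
      by rewrite dotE S0 big1 // => j _; move: (H j); rewrite negbK => /eqP ->; rewrite mulr0.
    rewrite /dot (eq_bigr (fun _ => 1)); last by move=> i _; rewrite mxE mulr1.
    rewrite sumr_const card_ord => /eqP; rewrite -(rmorph0 (real_complex R)).
    rewrite (inj_eq (@complexI R)) pnatr_eq0 => /eqP N0.
    by have := ltn_ord k; rewrite {2}N0.
  have ek1 : e k1 = 1.
    have := S2 k1 u; rewrite Bu => /eqP; rewrite -subr_eq0 -{1}[phi k1 u]mul1r -mulrBl.
    rewrite mulf_eq0 (negPf Hk1) orbF subr_eq0 => /eqP H.
    by apply: (@complexI R); rewrite -H rmorph1.
  have others : forall j, j != k1 -> e j <= s1.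
    move=> j jk; rewrite leNgt; apply/negP => sj.
    move: cnt; rewrite -sum1_count big_enum_cond /= sum1_card => cnt.
    have c2 : (#|[set j; k1]| <= #|(fun i => (s1 < e i)%R)|)%N.
      apply: subset_leq_card; apply/subsetP => x.
      by rewrite !inE => /orP [] /eqP ->; rewrite /in_mem /= ?sj // ek1.
    by move: (leq_trans c2 cnt); rewrite cards2 jk.
  have phiu : forall j, j != k1 -> phi j u = 0.
    move=> j jk; have := S2 j u; rewrite Bu => /eqP; rewrite -subr_eq0 -{1}[phi j u]mul1r -mulrBl.
    rewrite mulf_eq0 subr_eq0 => /orP [/eqP H|/eqP //].
    have : e j = 1 by apply: (@complexI R); rewrite -H rmorph1.
    by move: (others j jk) => /le_lt_trans /(_ s1small) /[swap] ->; rewrite ltxx.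
  have gk1 : n2 k1 = 0.
    have := S0 g u; rewrite -dotE g1 (bigD1 k1) //= big1 ?addr0; last first.
      by move=> j jk; rewrite phiu ?mulr0.
    move=> /esym /eqP; rewrite rmorph0 mulf_eq0 (negPf Hk1) orbF conjC_eq0 => /eqP H.
    by rewrite /n2 H mul0r.
  have [->|kk] := eqVneq k k1; first by right.
  by left; apply: le_trans (others k kk) s1g.
rewrite -lecR rmorphM /= Eg EMg mulr_sumr; apply: ler_sum => k _.
case: (key k) => [H|->]; last by rewrite !mulr0.
by apply: ler_wpM2r; rewrite ?n2ge0 // lecR.
Qed.

Section Gen.
Variable R : rcfType.
Variable N : nat.
Local Notation ones := (const_mx 1 : 'cV[R]_N).
Local Notation Jm := (const_mx (N%:R^-1) : 'M[R]_N).

Lemma nr_le (a b : 'cV[R]_N) c : 0 <= c -> nrm2 a <= c ^+ 2 * nrm2 b -> nr a <= c * nr b.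
Proof.
move=> c0 H; rewrite /nr -(ger0_norm c0) -sqrtr_sqr -sqrtrM ?sqr_ge0 //.
by rewrite ler_sqrt ?mulr_ge0 ?sqr_ge0 ?nrm2_ge0 // real_normK ?ger0_real.
Qed.

Lemma nr_mono (a b : 'cV[R]_N) : nrm2 a <= nrm2 b -> nr a <= nr b.
Proof. by move=> H; rewrite -[nr b]mul1r; apply: nr_le; rewrite ?expr1n ?mul1r. Qed.

Lemma bnd0N (X : 'M[R]_N) c : N = 0%N -> 0 <= c -> bnd X c.
Proof.
move=> N0 c0 f; have e : forall g : 'cV[R]_N, nr g = 0.
  by move=> g; rewrite /nr /nrm2 /dot; move: g; rewrite N0 => g; rewrite big_ord0 sqrtr0.
by rewrite !e mulr0.
Qed.

Lemma bnd_zero (X : 'M[R]_N) c : X = 0 -> 0 <= c -> bnd X c.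
Proof.
move=> -> c0 f; rewrite mul0mx /nr /nrm2 /dot big1 ?sqrtr0 ?mulr_ge0 ?nr_ge0 //.
by move=> i _; rewrite mxE mul0r.
Qed.

Lemma bnd_one : bnd (1%:M : 'M[R]_N) 1.
Proof. by move=> f; rewrite mul1mx mul1r. Qed.

Lemma ds_bnd (X : 'M[R]_N) : (forall i j, 0 <= X i j) ->
  X *m ones = ones -> X^T *m ones = ones -> bnd X 1.
Proof.
move=> X0 X1 XT1; apply: bnd_nrm2 => // f; rewrite expr1n mul1r.
have rs : forall i, \sum_j X i j = 1.
  move=> i; have := congr1 (fun A : 'cV[R]_N => A i 0) X1; rewrite !mxE => <-.
  by apply: eq_bigr => j _; rewrite mxE mulr1.
have cs : forall j, \sum_i X i j = 1.
  move=> j; have := congr1 (fun A : 'cV[R]_N => A j 0) XT1; rewrite !mxE => <-.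
  by apply: eq_bigr => i _; rewrite !mxE mulr1.
have step : forall i, (X *m f) i 0 * (X *m f) i 0 <= \sum_j X i j * (f j 0 * f j 0).
  move=> i; set m := (X *m f) i 0.
  have mE : m = \sum_j X i j * f j 0 by rewrite /m mxE.
  have : 0 <= \sum_j X i j * ((f j 0 - m) * (f j 0 - m)).
    by apply: sumr_ge0 => j _; apply: mulr_ge0 => //; rewrite -expr2 sqr_ge0.
  have -> : \sum_j X i j * ((f j 0 - m) * (f j 0 - m)) =
      \sum_j X i j * (f j 0 * f j 0) - 2 * m * (\sum_j X i j * f j 0) + m * m * (\sum_j X i j).
    rewrite !mulr_sumr -sumrB -big_split /=; apply: eq_bigr => j _; ring.
  rewrite rs -mE; lra.
rewrite /nrm2 /dot; apply: le_trans (ler_sum _ (fun i _ => step i)) _.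
rewrite exchange_big /=; apply: ler_sum => j _.
by rewrite -mulr_suml (cs j) mul1r.
Qed.

Lemma Jmf (f : 'cV[R]_N) : Jm *m f = (N%:R^-1 * \sum_j f j 0) *: ones.
Proof.
apply/matrixP => i k; rewrite (ord1 k) !mxE mulr1 mulr_sumr; apply: eq_bigr => j _.
by rewrite !mxE.
Qed.

Lemma dot_ones (f : 'cV[R]_N) : dot f ones = \sum_j f j 0.
Proof. by apply: eq_bigr => j _; rewrite mxE mulr1. Qed.

Lemma nrm2Z a (f : 'cV[R]_N) : nrm2 (a *: f) = a ^+ 2 * nrm2 f.
Proof. by rewrite /nrm2 /dot mulr_sumr; apply: eq_bigr => j _; rewrite !mxE; ring. Qed.

Lemma nrZ a (f : 'cV[R]_N) : nr (a *: f) = `|a| * nr f.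
Proof. by rewrite /nr nrm2Z sqrtrM ?sqr_ge0 // sqrtr_sqr. Qed.

Lemma dotZr' (f h : 'cV[R]_N) a : dot f (a *: h) = a * dot f h.
Proof. by rewrite /dot mulr_sumr; apply: eq_bigr => i _; rewrite mxE mulrCA. Qed.

Lemma decomp (f : 'cV[R]_N) : (0 < N)%N ->
  let c := N%:R^-1 * \sum_j f j 0 in
  let g := f - c *: ones in
  [/\ dot g ones = 0, nrm2 f = nrm2 g + nrm2 (c *: ones) & Jm *m f = c *: ones].
Proof.
move=> N0 c g.
have g1 : dot g ones = 0.
  rewrite dot_ones /g /c; under eq_bigr do rewrite !mxE mulr1.
  rewrite sumrB sumr_const card_ord -mulrnAl -[N%:R^-1 *+ N]mulr_natr mulVf ?mul1r ?subrr //.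
  by rewrite pnatr_eq0 -lt0n.
split => //; last by rewrite Jmf.
rewrite -{1}(subrK (c *: ones) f) -/g nrm2D dotZr' g1 mulr0 mulr0 addr0 //.
Qed.

Lemma J_bnd : bnd Jm 1.
Proof.
case: (posnP N) => [N0|Npos]; first by apply: bnd0N.
move=> f; have [_ E JE] := decomp f Npos.
rewrite mul1r JE; apply: nr_mono; rewrite E -[X in X <= _]add0r lerD2r nrm2_ge0 //.
Qed.

Lemma E_bnd (M : 'M[R]_N) gam : 0 <= gam -> M *m ones = ones ->
  (forall g, dot g ones = 0 -> nrm2 (M *m g) <= gam ^+ 2 * nrm2 g) -> bnd (M - Jm) gam.
Proof.
move=> g0 M1 H.
case: (posnP N) => [N0|Npos]; first by apply: bnd0N.
move=> f; have [g1 E JE] := decomp f Npos.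
set c := N%:R^-1 * \sum_j f j 0 in g1 E JE.
set g := f - c *: ones in g1 E.
have -> : (M - Jm) *m f = M *m g.
  by rewrite mulmxBl JE /g mulmxBr -scalemxAr M1.
apply: le_trans (nr_le g0 (H g g1)) _.
rewrite ler_wpM2l // nr_mono // E -[X in X <= _]addr0 lerD2l nrm2_ge0 //.
Qed.

Lemma P_bnd (sg : 'rV[R]_N) : (forall i, sg 0 i ^+ 2 = 1) -> bnd (diag_mx sg) 1.
Proof.
move=> H; apply: bnd_nrm2 => // f; rewrite expr1n mul1r le_eqVlt; apply/orP; left; apply/eqP.
rewrite /nrm2 /dot; apply: eq_bigr => i _; rewrite mul_diag_mx !mxE.
by rewrite mulrACA -expr2 H mul1r.
Qed.

Lemma JPJ_bnd (sg : 'rV[R]_N) :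
  bnd (Jm *m diag_mx sg *m Jm) `|N%:R^-1 * \sum_i sg 0 i|.
Proof.
move=> f; rewrite -!mulmxA [Jm *m f]Jmf -!scalemxAr Jmf scalerA.
have -> : \sum_j (diag_mx sg *m ones) j 0 = \sum_i sg 0 i.
  by apply: eq_bigr => j _; rewrite mul_diag_mx !mxE mulr1.
rewrite nrZ.
have := J_bnd f; rewrite mul1r Jmf nrZ => H.
rewrite normrM [`|_| * `|_|]mulrC -mulrA ler_wpM2l //.
Qed.

Lemma pair_bnd (M1 M0 P : 'M[R]_N) (b gam : R) : 0 <= gam -> 0 <= b ->
  bnd P 1 -> bnd M0 1 -> bnd (M1 - Jm) gam -> bnd (M0 - Jm) gam ->
  bnd (Jm *m P *m Jm) b -> bnd (M1 *m P *m M0 *m P) (b + 2 * gam).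
Proof.
move=> g0 b0 HP HM0 HE1 HE0 HJ.
have -> : M1 *m P *m M0 *m P = Jm *m P *m Jm *m P + Jm *m P *m (M0 - Jm) *m P
     + (M1 - Jm) *m P *m M0 *m P.
  rewrite !(mulmxBl, mulmxBr, mulmxA).
  by rewrite (addrC (Jm *m P *m Jm *m P)) subrK addrC subrK.
have -> : b + 2 * gam = b * 1 + 1 * 1 * gam * 1 + gam * 1 * 1 * 1 by ring.
have J1 := J_bnd.
apply: bnd_add; first apply: bnd_add.
- by apply: bnd_mul.
- apply: bnd_mul => //; first by rewrite !mulr_ge0.
  apply: bnd_mul => //; first by rewrite !mulr_ge0.
  by apply: bnd_mul.
- apply: bnd_mul => //; first by rewrite !mulr_ge0.
  apply: bnd_mul => //; first by rewrite !mulr_ge0.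
  by apply: bnd_mul.
Qed.

End Gen.

Section MxOf.
Variable R : rcfType.
Variable T : finType.
Local Notation N := #|{: T}|.
Local Notation ones := (const_mx 1 : 'cV[R]_N).

Lemma sum_ev (F : T -> R) : \sum_(i < N) F (enum_val i) = \sum_x F x.
Proof. by rewrite -big_enum_val; apply: eq_bigl => x; rewrite inE. Qed.

Lemma mxOf_ones (F : T -> T -> R) : (forall x, \sum_y F x y = 1) ->
  mxOf F *m ones = ones.
Proof.
move=> H; apply/matrixP => i k; rewrite !mxE -{2}(H (enum_val i)) -sum_ev.
by apply: eq_bigr => j _; rewrite !mxE mulr1.
Qed.

Lemma mxOf_tr (F : T -> T -> R) : (forall x y, F x y = F y x) -> (mxOf F)^T = mxOf F.
Proof. by move=> H; apply/matrixP => i j; rewrite !mxE H. Qed.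

Lemma mxOf_ge0 (F : T -> T -> R) : (forall x y, 0 <= F x y) -> forall i j, 0 <= mxOf F i j.
Proof. by move=> H i j; rewrite mxE. Qed.

Lemma mulmx_ge0 (X Y : 'M[R]_N) : (forall i j, 0 <= X i j) -> (forall i j, 0 <= Y i j) ->
  forall i j, 0 <= (X *m Y) i j.
Proof. by move=> HX HY i j; rewrite mxE; apply: sumr_ge0 => k _; apply: mulr_ge0. Qed.

End MxOf.

Section Conc.
Variable R : rcfType.
Variables n d1 d2 s : nat.
Variable rotG : 'I_n * 'I_d1 -> 'I_n * 'I_d1.
Variable rotH : Lbl d1 s * 'I_d2 -> Lbl d1 s * 'I_d2.
Hypothesis rotGi : involutive rotG.
Hypothesis rotHi : involutive rotH.
Local Notation T := (Vtx n d1 s).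
Local Notation N := #|{: T}|.
Local Notation ones := (const_mx 1 : 'cV[R]_N).

Lemma Rot_inv i : involutive (Rot rotG i : T -> T).
Proof.
move=> [a h]; rewrite /Rot; case: insub => [j|] //=.
set r := rotG (a, h j).
have rr : rotG (r.1, r.2) = (a, h j) by rewrite -surjective_pairing rotGi.
rewrite ffunE eqxx rr /=; congr (_, _); apply/ffunP => k; rewrite !ffunE.
by case: eqP => [->|].
Qed.

Lemma G_ones i : Gmx R s rotG i *m ones = ones.
Proof.
apply: mxOf_ones => x; rewrite (bigD1 (Rot rotG i x)) //= eqxx big1 ?addr0 //.
by move=> y; rewrite eq_sym => /negPf ->.
Qed.

Lemma G_tr i : (Gmx R s rotG i)^T = Gmx R s rotG i.
Proof.
apply: mxOf_tr => x y; have -> : (Rot rotG i x == y) = (Rot rotG i y == x) by apply/eqP/eqP => <-; apply: Rot_inv.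
by [].
Qed.

Lemma G_ge0 i : forall a b, 0 <= Gmx R s rotG i a b.
Proof. by apply: mxOf_ge0 => x y; rewrite ler0n. Qed.

Lemma adjH_sym (u w : Lbl d1 s) :
  #|[set k : 'I_d2 | (rotH (u, k)).1 == w]| = #|[set k : 'I_d2 | (rotH (w, k)).1 == u]|.
Proof.
suff H : forall u w, (#|[set k : 'I_d2 | (rotH (u, k)).1 == w]| <= #|[set k : 'I_d2 | (rotH (w, k)).1 == u]|)%N.
  by apply/eqP; rewrite eqn_leq !H.
move=> {}u {}w.
pose g k := (rotH (u, k)).2.
have inj : {in [set k : 'I_d2 | (rotH (u, k)).1 == w] &, injective g}.
  move=> k k'; rewrite !inE /g => /eqP e1 /eqP e2 e3.
  have : rotH (u, k) = rotH (u, k') by rewrite [LHS]surjective_pairing [RHS]surjective_pairing e1 e2 e3.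
  by move/(can_inj rotHi) => [].
rewrite -(card_in_imset inj); apply: subset_leq_card; apply/subsetP => x /imsetP [k].
rewrite inE => /eqP e1 ->; rewrite inE /g.
have -> : (w, (rotH (u, k)).2) = rotH (u, k) by rewrite [RHS]surjective_pairing e1.
by rewrite rotHi.
Qed.

Lemma adjH_sum (u : Lbl d1 s) : (0 < d2)%N -> \sum_w adjH R rotH u w = 1.
Proof.
move=> d2pos; rewrite /adjH -mulr_suml -natr_sum.
have -> : (\sum_w #|[set k : 'I_d2 | (rotH (u, k)).1 == w]|)%N = d2.
  rewrite -[RHS]card_ord -sum1_card (partition_big (fun k => (rotH (u, k)).1) predT) //=.
  by apply: eq_bigr => w _; rewrite -sum1_card; apply: eq_bigl => k; rewrite inE.
by rewrite mulfV // pnatr_eq0 -lt0n.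
Qed.

Lemma IAH_sum (x : T) : (0 < d2)%N -> \sum_y IAH R n rotH x y = 1.
Proof.
move=> d2pos; rewrite -(pair_bigA _ (fun a b => IAH R n rotH x (a, b))) /=.
rewrite (bigD1 x.1) //= [X in _ + X]big1 ?addr0; last first.
  by move=> a /negPf ne; apply: big1 => b _; rewrite /IAH /= eq_sym ne mul0r.
rewrite -(adjH_sum x.2 d2pos); apply: eq_bigr => b _.
by rewrite /IAH /= eqxx mul1r.
Qed.

Lemma A_ones : (0 < d2)%N -> mxOf (IAH R n rotH) *m ones = ones.
Proof. by move=> d2pos; apply: mxOf_ones => x; apply: IAH_sum. Qed.

Lemma A_tr : (mxOf (IAH R n rotH))^T = mxOf (IAH R n rotH).
Proof.
apply: mxOf_tr => x y; rewrite /IAH /adjH eq_sym adjH_sym //.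
Qed.

Lemma A_ge0 : forall a b, 0 <= mxOf (IAH R n rotH) a b.
Proof.
apply: mxOf_ge0 => x y; rewrite /IAH /adjH mulr_ge0 ?ler0n ?divr_ge0 ?ler0n //.
Qed.

Lemma A_zero : d2 = 0%N -> mxOf (IAH R n rotH) = 0.
Proof.
move=> d20; have e : (d2%:R : R) = 0 by rewrite d20.
by apply/matrixP => i j; rewrite !mxE /IAH /adjH e invr0 !mulr0.
Qed.

Lemma M_props i : (0 < d2)%N ->
  [/\ (forall a b, 0 <= Mmx R rotG rotH i a b), Mmx R rotG rotH i *m ones = ones
    & (Mmx R rotG rotH i)^T = Mmx R rotG rotH i].
Proof.
move=> d2pos; rewrite /Mmx; split.
- by apply: mulmx_ge0; [apply: mulmx_ge0; [apply: A_ge0|apply: G_ge0]|apply: A_ge0].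
- by rewrite -!mulmxA A_ones // G_ones A_ones.
- by rewrite !trmx_mul A_tr G_tr mulmxA.
Qed.

Lemma M_zero i : d2 = 0%N -> Mmx R rotG rotH i = 0.
Proof. by move=> d20; rewrite /Mmx A_zero // mul0mx mul0mx. Qed.

Lemma M_bnd i : bnd (Mmx R rotG rotH i) 1.
Proof.
case: (posnP d2) => [d20|d2pos]; first by apply: bnd_zero; rewrite ?M_zero.
have [H1 H2 H3] := M_props i d2pos.
by apply: ds_bnd => //; rewrite H3.
Qed.

Variable z : 'I_n -> bool.
Definition sgz : 'rV[R]_N := \row_(i < N) (-1) ^+ z (enum_val i).1.

Lemma Pz_diag : Pz R d1 s z = diag_mx sgz.
Proof.
apply/matrixP => i j; rewrite !mxE (inj_eq enum_val_inj).
by case: eqP => [->|]; rewrite ?mul1r ?mul0r ?mulr1n ?mulr0n.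
Qed.

Lemma Pz_bnd : bnd (Pz R d1 s z) 1.
Proof.
rewrite Pz_diag; apply: P_bnd => i; rewrite mxE.
by case: (z _); rewrite ?expr1 ?expr0 ?sqrrN ?expr1n.
Qed.

Lemma sgz_mean : (0 < N)%N -> `|N%:R^-1 * \sum_i sgz 0 i| = bias R z.
Proof.
move=> Npos; rewrite /bias.
have -> : \sum_i sgz 0 i = \sum_(x : T) (-1) ^+ z x.1.
  by rewrite -[RHS]sum_ev; apply: eq_bigr => i _; rewrite mxE.
rewrite -(pair_bigA _ (fun a (b : Lbl d1 s) => (-1) ^+ z (a, b).1)) /=.
rewrite (eq_bigr (fun a => #|{: Lbl d1 s}|%:R * (-1) ^+ z a)); last first.
  by move=> a _; rewrite sumr_const mulr_natl.
rewrite -mulr_sumr.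
have NE : N = (n * #|{: Lbl d1 s}|)%N by rewrite card_prod card_ord.
have Lpos : (0 < #|{: Lbl d1 s}|)%N by move: Npos; rewrite NE muln_gt0 => /andP [].
rewrite NE natrM invfM -mulrA [X in _ * X]mulrA mulVf ?mul1r //.
by rewrite pnatr_eq0 -lt0n.
Qed.

End Conc.

Unset Implicit Arguments.

Theorem mainTheorem2 (R : rcfType) (n d1 d2 s : nat)
  (rotG : 'I_n * 'I_d1 -> 'I_n * 'I_d1)
  (rotH : Lbl d1 s * 'I_d2 -> Lbl d1 s * 'I_d2)
  (z : 'I_n -> bool) (eta0 gamma : R) :
  is_rotation_map rotG -> locally_invertible rotG ->
  is_rotation_map rotH ->
  bias R z <= eta0 ->
  0 <= gamma ->
  (forall i : nat, (i.+2 <= s)%N -> sigma2_le (Mmx R rotG rotH i) gamma) ->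
  opnorm_le (prodMP R rotG rotH z (s.-1)) ((eta0 + 2 * gamma) ^+ (s.-1)./2).
Proof.
move=> rGi _ rHi hb g0 hsig.
set c0 := eta0 + 2 * gamma.
have b0 : 0 <= bias R z by rewrite /bias normr_ge0.
have c00 : 0 <= c0 by rewrite /c0; lra.
apply: bnd_opnorm; first exact: exprn_ge0.
case: (posnP #|{: Vtx n d1 s}|) => [N0|Npos]; first by apply: bnd0N; rewrite ?exprn_ge0.
have single : forall i, bnd (Mmx R rotG rotH i *m Pz R d1 s z) 1.
  by move=> i; rewrite -[1 : R]mul1r; apply: bnd_mul => //; [apply: (@M_bnd R n d1 d2 s rotG rotH rGi rHi i) | apply: Pz_bnd].
have pair : forall i, (i.+3 <= s)%N ->
    bnd (Mmx R rotG rotH i.+1 *m Pz R d1 s z *m Mmx R rotG rotH i *m Pz R d1 s z) c0.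
  move=> i hi.
  case: (posnP d2) => [d20|d2pos].
    by apply: bnd_zero => //; rewrite (@M_zero R n d1 d2 s rotG rotH i.+1 d20) !mul0mx.
  have Eb : forall j, (j.+2 <= s)%N -> bnd (Mmx R rotG rotH j - const_mx (#|{: Vtx n d1 s}|%:R^-1)) gamma.
    move=> j hj; have [H1 H2 H3] := @M_props R n d1 d2 s rotG rotH rGi rHi j d2pos.
    have [sv [Hsv Hsv1]] := hsig j hj.
    apply: E_bnd => //.
    apply: (sigma2_bound Hsv Hsv1 (@M_bnd R n d1 d2 s rotG rotH rGi rHi j) H2); by rewrite H3.
  apply: (bnd_le (a := bias R z + 2 * gamma)); first by rewrite /c0 lerD2r.
  apply: pair_bnd => //.
  - exact: Pz_bnd.
  - exact: (@M_bnd R n d1 d2 s rotG rotH rGi rHi i).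
  - by apply: Eb.
  - by apply: Eb; apply: leq_trans hi.
  - by rewrite Pz_diag -(@sgz_mean R n d1 s z Npos); apply: JPJ_bnd.
have main : forall k, (k <= s.-1)%N -> bnd (prodMP R rotG rotH z k) (c0 ^+ k./2).
  elim/ltn_ind => k IH hk.
  case: k IH hk => [|[|k]] IH hk.
  - rewrite (_ : prodMP R rotG rotH z 0 = 1%:M) // expr0; apply: bnd_one.
  - rewrite (_ : (1)./2 = 0)%N // expr0.
    rewrite (_ : prodMP R rotG rotH z 1 = Mmx R rotG rotH 0 *m Pz R d1 s z *m 1%:M) //.
    by rewrite mulmx1; apply: single.
  - rewrite (_ : (k.+2)./2 = (k./2).+1)%N // exprS.
    rewrite (_ : prodMP R rotG rotH z k.+2 = Mmx R rotG rotH k.+1 *m Pz R d1 s z *m (Mmx R rotG rotH k *m Pz R d1 s z *m prodMP R rotG rotH z k)) //.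
    rewrite (mulmxA (Mmx R rotG rotH k.+1 *m Pz R d1 s z) (Mmx R rotG rotH k *m Pz R d1 s z) (prodMP R rotG rotH z k)).
    rewrite (mulmxA (Mmx R rotG rotH k.+1 *m Pz R d1 s z) (Mmx R rotG rotH k) (Pz R d1 s z)).
    apply: bnd_mul => //.
    + have hk3 : (k.+3 <= s)%N by move: hk; case: (s).
      exact: (pair k hk3).
    + apply: IH; first by rewrite ltnS ltnW.
      by apply: leq_trans hk; apply: leq_trans (leqnSn _) (leqnSn _).
exact: main.
Qed.
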